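(* Suppose the splitting condition $\sum_{j=1}^mP_jv=v$ for all $v\in H_0$ holds. Then for every $x\in H$ with $\langle x,R_0x\rangle>0$ and every $n\ge0$, $\mathbb E_{\nu_x}[M_n]\le(1-1/m)^n\langle x,R_0x\rangle$, and $\langle x,R_\infty(\omega)x\rangle=0$ for $\nu_x$-almost every $\omega$.
   Context: Let $H$ be a complex Hilbert space, $m\ge2$, $P_1,\dots,P_m$ orthogonal projections on $H$, $R_0\in B(H)_+$, and $H_0=\overline{\mathrm{ran}}(R_0^{1/2})$. Let $\mathcal A=\{1,\dots,m\}$, $\mathcal W$ the set of finite words over $\mathcal A$ (including the empty word $\emptyset$); for nonempty $w=j_1\cdots j_n$, $w^-=j_1\cdots j_{n-1}$, and $wj$ is concatenation. WR energy tree: $R_\emptyset=R_0$, and for $w=j_1\cdots j_n$, $n\ge1$, $R_w=R_{w^-}^{1/2}(I-P_{j_n})R_{w^-}^{1/2}$, $D_w=R_{w^-}^{1/2}P_{j_n}R_{w^-}^{1/2}$. $\Omega=\mathcal A^{\mathbb N}$; for $\omega=(j_1,j_2,\dots)$, $\omega|_n=j_1\cdots j_n$, $\omega|_0=\emptyset$; cylinders $[w]=\{\omega:\omega|_{|w|}=w\}$. $R_\infty(\omega)$ is the strong limit of the Loewner-decreasing sequence $R_{\omega|_n}$. $M_n(\omega)=\langle x,R_{\omega|_n}x\rangle$. Energy-biased path measure: with $x$ fixed, $a_{wj}=\langle x,D_{wj}x\rangle$, a fixed probability vector $q$ on $\mathcal A$, $p_x(j\mid w)=a_{wj}/\sum_k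 a_{wk}$ if $\sum_ka_{wk}>0$ and $p_x(j\mid w)=q_j$ otherwise; $\nu_x$ is the unique Borel probability measure on $\Omega$ with $\nu_x([j_1\cdots j_n])=\prod_{i=1}^n p_x(j_i\mid j_1\cdots j_{i-1})$. *)

(* Defs.v *)
From HB Require Import structures.
From mathcomp Require Import all_boot all_order all_algebra.
From mathcomp Require Import all_classical all_reals all_analysis.
From mathcomp Require Import complex.
From Stdlib Require Import ClassicalEpsilon.

Set Implicit Arguments.
Unset Strict Implicit.
Unset Printing Implicit Defensive.

Import Order.TTheory GRing.Theory Num.Theory.
Local Open Scope ring_scope.
Local Open Scope classical_set_scope.

Section HilbertDefs.
Variable R : realType.
Local Notation C := R[i].
Variable H : lmodType C.
(* inner product, linear in the second argument, conjugate-linear in the first *)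
Variable ip : H -> H -> C.

Definition is_inner_product : Prop :=
  [/\ (forall x y z : H, ip x (y + z) = ip x y + ip x z),
      (forall (x y : H) (a : C), ip x (a *: y) = a * ip x y),
      (forall x y : H, ip y x = (ip x y)^*),
      (forall x : H, 0 <= ip x x) &
      (forall x : H, ip x x = 0 -> x = 0)].

Definition hnorm (x : H) : R := Num.sqrt (complex.Re (ip x x)).

Definition hcvg_to (u : nat -> H) (y : H) : Prop :=
  forall e : R, 0 < e -> exists N : nat, forall n : nat, (N <= n)%N -> hnorm (u n - y) < e.

Definition hcauchy (u : nat -> H) : Prop :=
  forall e : R, 0 < e -> exists N : nat, forall n k : nat,
    (N <= n)%N -> (N <= k)%N -> hnorm (u n - u k) < e.

Definition hilbert : Prop :=
  is_inner_product /\ forall u : nat -> H, hcauchy u -> exists y, hcvg_to u y.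

Definition bounded_op (T : H -> H) : Prop :=
  (forall (a : C) (x y : H), T (a *: x + y) = a *: T x + T y) /\
  exists c : R, forall x : H, hnorm (T x) <= c * hnorm x.

Definition orth_proj (P : H -> H) : Prop :=
  [/\ bounded_op P, (forall x, P (P x) = P x) & (forall x y, ip (P x) y = ip x (P y))].

Definition positive_op (T : H -> H) : Prop :=
  bounded_op T /\ forall x : H, 0 <= ip x (T x).

Definition op_sqrt (T : H -> H) : H -> H :=
  epsilon (inhabits (fun x : H => x))
    (fun S : H -> H => positive_op S /\ forall x, S (S x) = T x).

(* real quadratic form <x, T x> (real for positive T) *)
Definition qf (x : H) (T : H -> H) : R := complex.Re (ip x (T x)).

(* H_0 = closure of ran(R_0^{1/2}) *)
Definition in_H0 (R0 : H -> H) (v : H) : Prop :=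
  forall e : R, 0 < e -> exists y : H, hnorm (v - op_sqrt R0 y) < e.

Variable m : nat.
Variable P : 'I_m -> H -> H.
Variable R0 : H -> H.

Definition tree_step (Rw : H -> H) (j : 'I_m) : H -> H :=
  fun v => op_sqrt Rw (op_sqrt Rw v - P j (op_sqrt Rw v)).

(* R_w for a finite word w (letters are in 'I_m, i.e. A = {1..m} shifted) *)
Definition treeR (w : seq 'I_m) : H -> H := foldl tree_step R0 w.

Definition treeD (w : seq 'I_m) (j : 'I_m) : H -> H :=
  fun v => op_sqrt (treeR w) (P j (op_sqrt (treeR w) v)).

Variable q : 'I_m -> R.
Variable x : H.

Definition energy_a (w : seq 'I_m) (j : 'I_m) : R := qf x (treeD w j).

Definition trans_prob (w : seq 'I_m) (j : 'I_m) : R :=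
  let s := \sum_(k < m) energy_a w k in
  if 0 < s then energy_a w j / s else q j.

(* prod_{i=1}^n p_x(j_i | j_1 ... j_{i-1}) where pre is the already-read prefix *)
Fixpoint path_prob_from (pre w : seq 'I_m) : R :=
  match w with
  | [::] => 1
  | j :: w' => trans_prob pre j * path_prob_from (rcons pre j) w'
  end.

Definition path_prob (w : seq 'I_m) : R := path_prob_from [::] w.

End HilbertDefs.

(* 'I_n.+1 is inhabited; needed for the path space to be a measurableType *)
HB.instance Definition _ (n : nat) := isPointed.Build 'I_n.+1 ord0.

Definition prefix (m : nat) (om : nat -> 'I_m) (n : nat) : seq 'I_m := mkseq om n.

Definition cyl (m : nat) (w : seq 'I_m) : set (nat -> 'I_m) :=
  [set om | prefix om (size w) = w].

Definition cylinders (m : nat) : set (set (nat -> 'I_m)) := range (@cyl m).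

(* the alphabet is 'I_n.+1 (m = n.+1 letters); the successor form makes the
   path space a pointedType, as required for a measurableType *)
Notation Omega n := (g_sigma_algebraType (@cylinders n.+1)).

Section PathDefs.
Variable R : realType.
Variable H : lmodType R[i].
Variable ip : H -> H -> R[i].
Variable n : nat.
Local Notation m := n.+1.
Variable P : 'I_m -> H -> H.
Variable R0 : H -> H.

Definition Rinf (om : nat -> 'I_m) : H -> H :=
  fun y => epsilon (inhabits (0 : H))
    (fun z => hcvg_to ip (fun n => treeR ip P R0 (prefix om n) y) z).

Definition Mn (x : H) (k : nat) (om : Omega n) : R :=
  qf ip x (treeR ip P R0 (prefix om k)).
End PathDefs.

(* Main.v *)
Require Import Defs.
From HB Require Import structures.
From mathcomp Require Import all_boot all_order all_algebra.
From mathcomp Require Import all_classical all_reals all_analysis.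
From mathcomp Require Import complex.
From Stdlib Require Import ClassicalEpsilon.
Set Implicit Arguments.
Unset Strict Implicit.
Unset Printing Implicit Defensive.
Import Order.TTheory GRing.Theory Num.Theory.
Local Open Scope ring_scope.

From mathcomp Require Import ring lra.
Notation cRe := complex.Re.
Notation cIm := complex.Im.

Section C.
Variable R : realType.
Implicit Types z w : R[i].
Lemma ReD z w : cRe (z + w) = cRe z + cRe w. Proof. by case: z => a b; case: w => c d. Qed.
Lemma ImD z w : cIm (z + w) = cIm z + cIm w. Proof. by case: z => a b; case: w => c d. Qed.
Lemma ReN z : cRe (- z) = - cRe z. Proof. by case: z. Qed.
Lemma ImN z : cIm (- z) = - cIm z. Proof. by case: z. Qed.
Lemma ReB z w : cRe (z - w) = cRe z - cRe w. Proof. by rewrite ReD ReN. Qed.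
Lemma ImB z w : cIm (z - w) = cIm z - cIm w. Proof. by rewrite ImD ImN. Qed.
Lemma Re0 : cRe (0 : R[i]) = 0. Proof. by []. Qed.
Lemma Im0 : cIm (0 : R[i]) = 0. Proof. by []. Qed.
Lemma ReM z w : cRe (z * w) = cRe z * cRe w - cIm z * cIm w. Proof. by case: z => a b; case: w => c d. Qed.
Lemma ImM z w : cIm (z * w) = cRe z * cIm w + cIm z * cRe w. Proof. by case: z => a b; case: w => c d. Qed.
Lemma ReJ z : cRe (Num.conj z) = cRe z. Proof. by case: z. Qed.
Lemma ImJ z : cIm (Num.conj z) = - cIm z. Proof. by case: z. Qed.
Lemma ge0E z : (0 <= z) = (cIm z == 0) && (0 <= cRe z). Proof. by rewrite lecE eq_sym. Qed.
Lemma cplx_eq z w : cRe z = cRe w -> cIm z = cIm w -> z = w.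
Proof. by case: z => a b; case: w => c d /= -> ->. Qed.
Lemma ReMr (t : R) z : cRe ((t%:C)%C * z) = t * cRe z.
Proof. by case: z => a b /=; rewrite mul0r subr0. Qed.
Lemma ImMr (t : R) z : cIm ((t%:C)%C * z) = t * cIm z.
Proof. by case: z => a b /=; rewrite mul0r addr0. Qed.
Lemma Rec (t : R) : cRe ((t%:C)%C) = t. Proof. by []. Qed.
Lemma Imc (t : R) : cIm ((t%:C)%C) = 0. Proof. by []. Qed.
Lemma Re_sum (I : Type) (s : seq I) (P : pred I) (F : I -> R[i]) :
  cRe (\sum_(i <- s | P i) F i) = \sum_(i <- s | P i) cRe (F i).
Proof. by apply: (big_morph _ ReD Re0). Qed.
Lemma Im_sum (I : Type) (s : seq I) (P : pred I) (F : I -> R[i]) :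
  cIm (\sum_(i <- s | P i) F i) = \sum_(i <- s | P i) cIm (F i).
Proof. by apply: (big_morph _ ImD Im0). Qed.
Lemma Rei z : cRe ('i%C * z) = - cIm z. Proof. by case: z => a b /=; rewrite !mul0r !mul1r sub0r. Qed.
Lemma ReJi z : cRe (Num.conj ('i%C) * z) = cIm z. Proof. by case: z => a b /=; rewrite mul0r mulN1r sub0r opprK. Qed.
Lemma cplx_realE z : cIm z = 0 -> z = (cRe z)%:C%C.
Proof. by case: z => a b /= ->. Qed.
Lemma c_mul (a b : R) : ((a * b)%:C)%C = (a%:C)%C * (b%:C)%C.
Proof. by rewrite rmorphM. Qed.
Lemma c_conj (a : R) : Num.conj ((a%:C)%C) = (a%:C)%C.
Proof. by apply: cplx_eq; rewrite ?ReJ ?ImJ //= oppr0. Qed.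
End C.

From mathcomp Require Import ring lra.
Lemma quad_cs (R : realFieldType) (a b c : R) : 0 <= c ->
  (forall t, 0 <= a + 2 * b * t + c * t ^+ 2) -> b ^+ 2 <= a * c.
Proof.
move=> c0 H.
have [cz|cpos] := eqVneq c 0.
  have [bz|bn] := eqVneq b 0; first by rewrite bz expr0n /= cz mulr0.
  have := H (- (a + 1) / (2 * b)).
  have -> : a + 2 * b * (- (a + 1) / (2 * b)) + c * (- (a + 1) / (2 * b)) ^+ 2 = -1.
    rewrite cz; field; by rewrite bn.
  by rewrite ler0N1.
have cp : 0 < c by rewrite lt_def cpos c0.
have := H (- b / c).
have -> : a + 2 * b * (- b / c) + c * (- b / c) ^+ 2 = (a * c - b ^+ 2) / c.
  by field.
by rewrite pmulr_lge0 ?invr_gt0 // subr_ge0.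
Qed.

Section Hilb.
Variable R : realType.
Variable H : lmodType R[i].
Variable ip : H -> H -> R[i].
Hypothesis hip : is_inner_product ip.

Local Notation C := R[i].
Local Notation rc t := ((t%:C)%C : R[i]).

Lemma ipDr x y z : ip x (y + z) = ip x y + ip x z. Proof. by case: hip. Qed.
Lemma ipZr x y a : ip x (a *: y) = a * ip x y. Proof. by case: hip. Qed.
Lemma ipC x y : ip y x = Num.conj (ip x y). Proof. by case: hip. Qed.
Lemma ip_ge0 x : 0 <= ip x x. Proof. by case: hip. Qed.
Lemma ip_def x : ip x x = 0 -> x = 0. Proof. by case: hip => _ _ _ _; apply. Qed.

Lemma ip0r x : ip x 0 = 0.
Proof. by apply: (addrI (ip x 0)); rewrite -ipDr !addr0. Qed.
Lemma ipNr x y : ip x (- y) = - ip x y.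
Proof. by rewrite -scaleN1r ipZr mulN1r. Qed.
Lemma ipBr x y z : ip x (y - z) = ip x y - ip x z.
Proof. by rewrite ipDr ipNr. Qed.
Lemma ipDl x y z : ip (y + z) x = ip y x + ip z x.
Proof. by rewrite ipC ipDr rmorphD; congr (_ + _); rewrite [RHS]ipC. Qed.
Lemma ipZl x y a : ip (a *: y) x = Num.conj a * ip y x.
Proof. by rewrite ipC ipZr rmorphM; congr (_ * _); rewrite [RHS]ipC. Qed.
Lemma ip0l x : ip 0 x = 0.
Proof. by rewrite ipC ip0r rmorph0. Qed.
Lemma ipNl x y : ip (- y) x = - ip y x.
Proof. by rewrite ipC ipNr rmorphN; congr (- _); rewrite [RHS]ipC. Qed.
Lemma ipBl x y z : ip (y - z) x = ip y x - ip z x.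
Proof. by rewrite ipDl ipNl. Qed.
Lemma ip_sumr x (I : Type) (s : seq I) (P : pred I) (F : I -> H) :
  ip x (\sum_(i <- s | P i) F i) = \sum_(i <- s | P i) ip x (F i).
Proof. by apply: (big_morph _ (ipDr x) (ip0r x)). Qed.
Lemma ip_suml x (I : Type) (s : seq I) (P : pred I) (F : I -> H) :
  ip (\sum_(i <- s | P i) F i) x = \sum_(i <- s | P i) ip (F i) x.
Proof. by apply: (big_morph _ (fun a b => ipDl x a b) (ip0l x)). Qed.

Definition re x y := cRe (ip x y).
Definition nrm2 x := re x x.

Lemma Im_ipxx x : cIm (ip x x) = 0.
Proof. by have := ip_ge0 x; rewrite ge0E => /andP [/eqP]. Qed.
Lemma nrm2_ge0 x : 0 <= nrm2 x.
Proof. by have := ip_ge0 x; rewrite ge0E => /andP []. Qed.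
Lemma ipxxE x : ip x x = rc (nrm2 x).
Proof. by rewrite {1}(cplx_realE (Im_ipxx x)). Qed.
Lemma nrm2_eq0 x : nrm2 x = 0 -> x = 0.
Proof. by move=> h; apply: ip_def; rewrite ipxxE h. Qed.
Lemma reC x y : re x y = re y x.
Proof. by rewrite /re ipC ReJ. Qed.
Lemma reDr x y z : re x (y + z) = re x y + re x z. Proof. by rewrite /re ipDr ReD. Qed.
Lemma reDl x y z : re (y + z) x = re y x + re z x. Proof. by rewrite /re ipDl ReD. Qed.
Lemma reNr x y : re x (- y) = - re x y. Proof. by rewrite /re ipNr ReN. Qed.
Lemma reNl x y : re (- y) x = - re y x. Proof. by rewrite /re ipNl ReN. Qed.
Lemma reBr x y z : re x (y - z) = re x y - re x z. Proof. by rewrite /re ipBr ReB. Qed.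
Lemma reBl x y z : re (y - z) x = re y x - re z x. Proof. by rewrite /re ipBl ReB. Qed.
Lemma reZr x y t : re x (rc t *: y) = t * re x y. Proof. by rewrite /re ipZr ReMr. Qed.
Lemma reZl x y t : re (rc t *: y) x = t * re y x. Proof. by rewrite /re ipZl c_conj ReMr. Qed.
Lemma re0r x : re x 0 = 0. Proof. by rewrite /re ip0r. Qed.
Lemma re0l x : re 0 x = 0. Proof. by rewrite /re ip0l. Qed.

Lemma hnormE x : hnorm ip x = Num.sqrt (nrm2 x). Proof. by []. Qed.
Lemma hnorm_ge0 x : 0 <= hnorm ip x. Proof. by rewrite hnormE sqrtr_ge0. Qed.
Lemma hnorm_sq x : hnorm ip x ^+ 2 = nrm2 x. Proof. by rewrite hnormE sqr_sqrtr // nrm2_ge0. Qed.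

Definition linop (T : H -> H) := forall a x y, T (a *: x + y) = a *: T x + T y.
Definition selfadj (T : H -> H) := forall x y, ip (T x) y = ip x (T y).

Section LinFacts.
Variable T : H -> H.
Hypothesis lT : linop T.
Lemma lin0 : T 0 = 0.
Proof. have h := lT 1 0 0; rewrite scale1r !addr0 scale1r in h. by apply: (addrI (T 0)); rewrite addr0 -h. Qed.
Lemma linD x y : T (x + y) = T x + T y.
Proof. by have := lT 1 x y; rewrite !scale1r. Qed.
Lemma linZ a x : T (a *: x) = a *: T x.
Proof. by have := lT a x 0; rewrite !addr0 lin0 addr0. Qed.
Lemma linN x : T (- x) = - T x.
Proof. by rewrite -scaleN1r linZ scaleN1r. Qed.
Lemma linB x y : T (x - y) = T x - T y.
Proof. by rewrite linD linN. Qed.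
Lemma lin_sum (I : Type) (s : seq I) (P : pred I) (F : I -> H) :
  T (\sum_(i <- s | P i) F i) = \sum_(i <- s | P i) T (F i).
Proof. by apply: (big_morph _ linD lin0). Qed.
End LinFacts.

Lemma cs_op (T : H -> H) : linop T -> selfadj T -> (forall v, 0 <= re v (T v)) ->
  forall u v, re u (T v) ^+ 2 <= re u (T u) * re v (T v).
Proof.
move=> lT sT pT u v.
have sym : re v (T u) = re u (T v) by rewrite /re -sT ipC ReJ.
apply: quad_cs; first exact: pT.
move=> t; have := pT (u + rc t *: v).
rewrite (linD lT) (linZ lT) reDl !reDr !reZl !reZr sym.
suff -> : re u (T u) + t * re u (T v) + (t * re u (T v) + t * (t * re v (T v))) =
  re u (T u) + 2 * re u (T v) * t + re v (T v) * t ^+ 2 by [].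
ring.
Qed.

Lemma lin_id : linop id. Proof. by []. Qed.
Lemma sa_id : selfadj id. Proof. by []. Qed.

Lemma re_cs u v : re u v ^+ 2 <= nrm2 u * nrm2 v.
Proof. exact: (cs_op lin_id sa_id nrm2_ge0). Qed.

Lemma re_le u v : re u v <= hnorm ip u * hnorm ip v.
Proof.
have h : `|re u v| <= hnorm ip u * hnorm ip v.
  rewrite -sqrtr_sqr !hnormE -sqrtrM ?nrm2_ge0 //.
  by rewrite ler_sqrt ?re_cs // mulr_ge0 ?nrm2_ge0.
exact: le_trans (ler_norm _) h.
Qed.
Lemma re_abs u v : `|re u v| <= hnorm ip u * hnorm ip v.
Proof.
rewrite -sqrtr_sqr !hnormE -sqrtrM ?nrm2_ge0 //.
by rewrite ler_sqrt ?re_cs // mulr_ge0 ?nrm2_ge0.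
Qed.

Lemma nrm2D x y : nrm2 (x + y) = nrm2 x + 2 * re x y + nrm2 y.
Proof. rewrite /nrm2 reDl !reDr (reC y x); ring. Qed.
Lemma nrm2N x : nrm2 (- x) = nrm2 x.
Proof. by rewrite /nrm2 reNl reNr opprK. Qed.
Lemma nrm2Z t x : nrm2 (rc t *: x) = t ^+ 2 * nrm2 x.
Proof. by rewrite /nrm2 reZl reZr mulrA -expr2. Qed.

Lemma hnormD x y : hnorm ip (x + y) <= hnorm ip x + hnorm ip y.
Proof.
rewrite -(ger0_norm (addr_ge0 (hnorm_ge0 x) (hnorm_ge0 y))) -sqrtr_sqr hnormE.
rewrite ler_sqrt ?sqr_ge0 // nrm2D sqrrD !hnorm_sq.
rewrite lerD2r lerD2l; have := re_le x y; rewrite -mulr_natr; lra.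
Qed.

Lemma hnorm0 : hnorm ip 0 = 0. Proof. by rewrite hnormE /nrm2 re0r sqrtr0. Qed.
Lemma hnormN x : hnorm ip (- x) = hnorm ip x. Proof. by rewrite !hnormE nrm2N. Qed.
Lemma hnormB x y : hnorm ip (x - y) = hnorm ip (y - x). Proof. by rewrite -hnormN opprB. Qed.
Lemma hnormZ t x : hnorm ip (rc t *: x) = `|t| * hnorm ip x.
Proof. by rewrite !hnormE nrm2Z sqrtrM ?sqr_ge0 // sqrtr_sqr. Qed.
Lemma hnorm_eq0 x : hnorm ip x = 0 -> x = 0.
Proof. by rewrite hnormE => /eqP; rewrite sqrtr_eq0 => h; apply: nrm2_eq0; apply/eqP; rewrite eq_le h nrm2_ge0. Qed.
Lemma nrm2Zc a x : nrm2 (a *: x) = (cRe a ^+ 2 + cIm a ^+ 2) * nrm2 x.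
Proof.
rewrite /nrm2 /re ipZl ipZr mulrA ipxxE.
have -> : Num.conj a * a = rc (cRe a ^+ 2 + cIm a ^+ 2).
  by apply: cplx_eq; case: a => p q /=; ring.
by rewrite -c_mul.
Qed.
Lemma hnormZc a x : hnorm ip (a *: x) = Num.sqrt (cRe a ^+ 2 + cIm a ^+ 2) * hnorm ip x.
Proof. by rewrite !hnormE nrm2Zc sqrtrM // addr_ge0 ?sqr_ge0. Qed.
Lemma hnorm_sum (I : Type) (s : seq I) (P : pred I) (F : I -> H) :
  hnorm ip (\sum_(i <- s | P i) F i) <= \sum_(i <- s | P i) hnorm ip (F i).
Proof.
elim: s => [|a s IH]; first by rewrite !big_nil hnorm0.
rewrite !big_cons; case: (P a) => //.
by apply: le_trans (hnormD _ _) _; rewrite lerD2l.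
Qed.

Lemma le_eps (a b : R) : (forall e, 0 < e -> a <= b + e) -> a <= b.
Proof.
move=> h; rewrite leNgt; apply/negP => ab.
have := h ((a - b) / 2); rewrite divr_gt0 ?subr_gt0 // => /(_ isT).
lra.
Qed.

Lemma hcvg_uniq u a b : hcvg_to ip u a -> hcvg_to ip u b -> a = b.
Proof.
move=> ha hb; apply/eqP; rewrite -subr_eq0; apply/eqP; apply: hnorm_eq0.
apply/eqP; rewrite eq_le hnorm_ge0 andbT; apply: le_eps => e e0.
have e2 : 0 < e / 2 by rewrite divr_gt0.
have [N1 h1] := ha _ e2; have [N2 h2] := hb _ e2.
have := h1 (maxn N1 N2) (leq_maxl _ _); have := h2 (maxn N1 N2) (leq_maxr _ _).
have : hnorm ip (a - b) <= hnorm ip (u (maxn N1 N2) - b) + hnorm ip (a - u (maxn N1 N2)).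
  by have := hnormD (u (maxn N1 N2) - b) (a - u (maxn N1 N2)); rewrite addrC addrA subrK.
rewrite [hnorm ip (a - u _)]hnormB; lra.
Qed.

Lemma hcvg_lip (T : H -> H) (K : R) u a :
  (forall z w, hnorm ip (T z - T w) <= K * hnorm ip (z - w)) ->
  hcvg_to ip u a -> hcvg_to ip (fun n => T (u n)) (T a).
Proof.
move=> hT hu e e0.
have K1 : 0 < `|K| + 1 by rewrite ltr_wpDl.
have [N hN] := hu (e / (`|K| + 1)) (divr_gt0 e0 K1).
exists N => n /hN h.
apply: le_lt_trans (hT _ _) _.
apply: le_lt_trans (_ : (`|K| + 1) * hnorm ip (u n - a) < _).
  apply: (ler_wpM2r (hnorm_ge0 _)); apply: le_trans (ler_norm _) _; lra.
by rewrite mulrC -ltr_pdivlMr.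
Qed.

Lemma hcvgD u v a b : hcvg_to ip u a -> hcvg_to ip v b ->
  hcvg_to ip (fun n => u n + v n) (a + b).
Proof.
move=> hu hv e e0.
have e2 : 0 < e / 2 by rewrite divr_gt0.
have [N1 h1] := hu _ e2; have [N2 h2] := hv _ e2.
exists (maxn N1 N2) => n hn.
have := h1 n (leq_trans (leq_maxl _ _) hn); have := h2 n (leq_trans (leq_maxr _ _) hn).
have : hnorm ip (u n + v n - (a + b)) <= hnorm ip (u n - a) + hnorm ip (v n - b).
  by have := hnormD (u n - a) (v n - b); rewrite addrACA -opprD.
lra.
Qed.

Lemma hcvgZ (c : C) u a : hcvg_to ip u a -> hcvg_to ip (fun n => c *: u n) (c *: a).
Proof.
apply: (hcvg_lip (K := Num.sqrt (cRe c ^+ 2 + cIm c ^+ 2))) => z w.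
by rewrite -scalerBr hnormZc.
Qed.

Lemma hcvg_cst a : hcvg_to ip (fun _ => a) a.
Proof. by move=> e e0; exists 0%N => n _; rewrite subrr hnorm0. Qed.

Lemma hcvg_bound u a r : (forall n, hnorm ip (u n) <= r) -> hcvg_to ip u a ->
  hnorm ip a <= r.
Proof.
move=> hb hu; apply: le_eps => e e0.
have [N hN] := hu e e0.
have := hN N (leqnn N); have := hb N.
have : hnorm ip a <= hnorm ip (u N) + hnorm ip (u N - a).
  by rewrite (hnormB (u N)); have := hnormD (a - u N) (u N); rewrite subrK addrC.
lra.
Qed.

Definition rcvg (s : nat -> R) (l : R) :=
  forall e, 0 < e -> exists N, forall n, (N <= n)%N -> `|s n - l| < e.

Lemma rcvg_le s l r : (forall n, s n <= r) -> rcvg s l -> l <= r.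
Proof.
move=> hb hs; apply: le_eps => e e0.
have [N hN] := hs e e0; have := hN N (leqnn N); have := hb N.
rewrite ltr_norml; lra.
Qed.

Lemma rcvg_uniq s a b : rcvg s a -> rcvg s b -> a = b.
Proof.
move=> ha hb; apply/eqP; rewrite eq_le; apply/andP; split; apply: le_eps => e e0.
  have [N1 h1] := ha (e/2) (divr_gt0 e0 (ltr0Sn _ 1)); have [N2 h2] := hb (e/2) (divr_gt0 e0 (ltr0Sn _ 1)).
  have := h1 (maxn N1 N2) (leq_maxl _ _); have := h2 (maxn N1 N2) (leq_maxr _ _).
  rewrite !ltr_norml; lra.
have [N1 h1] := ha (e/2) (divr_gt0 e0 (ltr0Sn _ 1)); have [N2 h2] := hb (e/2) (divr_gt0 e0 (ltr0Sn _ 1)).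
have := h1 (maxn N1 N2) (leq_maxl _ _); have := h2 (maxn N1 N2) (leq_maxr _ _).
rewrite !ltr_norml; lra.
Qed.

Lemma rcvg_re y u a : hcvg_to ip u a -> rcvg (fun n => re y (u n)) (re y a).
Proof.
move=> hu e e0.
have K1 : 0 < hnorm ip y + 1 by rewrite ltr_wpDl ?hnorm_ge0.
have [N hN] := hu (e / (hnorm ip y + 1)) (divr_gt0 e0 K1).
exists N => n /hN h.
rewrite -reBr; apply: le_lt_trans (re_abs _ _) _.
apply: le_lt_trans (_ : (hnorm ip y + 1) * hnorm ip (u n - a) < _).
  by apply: (ler_wpM2r (hnorm_ge0 _)); rewrite lerDl.
by rewrite mulrC -ltr_pdivlMr.
Qed.

Lemma Im_ip y z : cIm (ip y z) = re ('i%C *: y) z.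
Proof. by rewrite /re ipZl ReJi. Qed.


Lemma Imi (z : C) : cIm ('i%C * z) = cRe z. Proof. by case: z => a b /=; rewrite !mul0r !mul1r add0r. Qed.
Lemma ImJi (z : C) : cIm (Num.conj ('i%C) * z) = - cRe z.
Proof. case: z => a b /=; lra. Qed.

Lemma pos_sa T : linop T -> (forall x, 0 <= ip x (T x)) -> selfadj T.
Proof.
move=> lT pT x y.
have hI z : cIm (ip z (T z)) = 0 by have := pT z; rewrite ge0E => /andP [/eqP].
have e1 : cIm (ip x (T y)) + cIm (ip y (T x)) = 0.
  have := hI (x + y); rewrite (linD lT) !ipDl !ipDr !ImD hI (hI y).
  lra.
have e2 : cRe (ip x (T y)) - cRe (ip y (T x)) = 0.
  have := hI (x + 'i%C *: y); rewrite (linD lT) (linZ lT) !ipDl !ipDr !ipZl !ipZr !ImD.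
  rewrite hI Imi ImJi mulrA.
  have -> : Num.conj ('i%C) * 'i%C = 1 :> C by apply: cplx_eq; rewrite /= ?mul0r; lra.
  rewrite mul1r hI; lra.
apply: cplx_eq; rewrite ipC ?ReJ ?ImJ; lra.
Qed.

Lemma sa_real T : selfadj T -> forall y, cIm (ip y (T y)) = 0.
Proof.
move=> sT y; have h : ip y (T y) = Num.conj (ip y (T y)) by rewrite -ipC sT.
have : cIm (ip y (T y)) = - cIm (ip y (T y)) by rewrite {1}h ImJ.
lra.
Qed.

Lemma sa_comp T U : selfadj T -> selfadj U -> (forall y, T (U y) = U (T y)) ->
  selfadj (fun y => T (U y)).
Proof. by move=> sT sU c x y; rewrite sT sU -c. Qed.

Lemma lin_comp T U : linop T -> linop U -> linop (fun y => T (U y)).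
Proof. by move=> lT lU a x y; rewrite lU lT. Qed.

Hypothesis hcomp : forall u : nat -> H, hcauchy ip u -> exists y, hcvg_to ip u y.

Section Sqrt.
Variable A : H -> H.
Hypothesis lA : linop A.
Hypothesis pA : forall x, 0 <= ip x (A x).
Variable c : R.
Hypothesis bA : forall y, hnorm ip (A y) <= c * hnorm ip y.

Let k := `|c| + 1.
Let k_gt0 : 0 < k. Proof. by rewrite ltr_wpDl. Qed.
Let sA : selfadj A. Proof. exact: pos_sa. Qed.

Let reA_ge0 y : 0 <= re y (A y).
Proof. by have := pA y; rewrite ge0E => /andP []. Qed.
Let reA_le y : re y (A y) <= k * nrm2 y.
Proof.
apply: le_trans (re_le _ _) _.
apply: le_trans (_ : hnorm ip y * (c * hnorm ip y) <= _).
  exact: (ler_wpM2l (hnorm_ge0 _) (bA y)).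
rewrite mulrCA -hnorm_sq expr2; apply: (ler_wpM2r (mulr_ge0 (hnorm_ge0 _) (hnorm_ge0 _))).
by apply: le_trans (ler_norm _) _; rewrite /k lerDl.
Qed.

Definition Bop y := y - rc (k^-1) *: A y.
Let lB : linop Bop.
Proof. by move=> a x y; rewrite /Bop lA scalerDr scalerA mulrC -scalerA scalerBr; rewrite addrACA -!addrA opprD. Qed.
Let sB : selfadj Bop.
Proof. by move=> x y; rewrite /Bop ipBl ipBr ipZl ipZr c_conj sA. Qed.
Let reB y : re y (Bop y) = nrm2 y - k^-1 * re y (A y).
Proof. by rewrite /Bop reBr reZr. Qed.
Let reB_ge0 y : 0 <= re y (Bop y).
Proof.
rewrite reB subr_ge0 ler_pdivrMl //.
Qed.
Let reB_le y : re y (Bop y) <= nrm2 y.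
Proof. by rewrite reB lerBlDr lerDl mulr_ge0 // invr_ge0 ltW. Qed.

Let nrm2B y : nrm2 (Bop y) <= nrm2 y.
Proof.
have := cs_op lB sB reB_ge0 (Bop y) y.
have h1 := reB_le (Bop y); have h2 := reB_le y.
change (re (Bop y) (Bop y)) with (nrm2 (Bop y)) => h.
have [z|nz] := eqVneq (nrm2 (Bop y)) 0; first by rewrite z nrm2_ge0.
have p : 0 < nrm2 (Bop y) by rewrite lt_def nz nrm2_ge0.
have : nrm2 (Bop y) ^+ 2 <= nrm2 (Bop y) * nrm2 y.
  by apply: le_trans h _; apply: ler_pM => //; apply: reB_ge0.
by rewrite expr2 ler_pM2l.
Qed.
Let hnormB' y : hnorm ip (Bop y) <= hnorm ip y.
Proof. by rewrite !hnormE ler_sqrt ?nrm2_ge0 ?nrm2B. Qed.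

Definition Bk n := iter n Bop.
Let lBk n : linop (Bk n).
Proof. rewrite /Bk; elim: n => [|n IH] a x y //=; by rewrite IH lB. Qed.
Let sBk n : selfadj (Bk n).
Proof. rewrite /Bk; elim: n => [|n IH] x y //=; by rewrite sB IH -iterSr. Qed.
Let hnormBk n y : hnorm ip (Bk n y) <= hnorm ip y.
Proof. rewrite /Bk; elim: n => [|n IH] //=; exact: le_trans (hnormB' _) IH. Qed.
Let reBk n y : `|re y (Bk n y)| <= nrm2 y.
Proof.
apply: le_trans (re_abs _ _) _; rewrite -hnorm_sq expr2.
exact: (ler_wpM2l (hnorm_ge0 _) (hnormBk _ _)).
Qed.


Let BkS n y : Bk n.+1 y = Bop (Bk n y). Proof. by []. Qed.

Definition pev (p : {poly R}) y := \sum_(0 <= i < size p) rc p`_i *: Bk i y.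

Lemma pevE (p : {poly R}) (y : H) n : (size p <= n)%N -> pev p y = \sum_(0 <= i < n) rc p`_i *: Bk i y.
Proof.
move=> hn; rewrite /pev [RHS](big_cat_nat (leq0n (size p)) hn) /=.
rewrite [X in _ = _ + X]big1_seq ?addr0 // => i /andP [_].
rewrite mem_index_iota => /andP [hi _].
by rewrite nth_default // scale0r.
Qed.

Lemma pev0 y : pev 0 y = 0. Proof. by rewrite /pev size_poly0 big_geq. Qed.

Lemma pevD p q y : pev (p + q) y = pev p y + pev q y.
Proof.
rewrite (@pevE p y (maxn (size p) (size q))) ?leq_maxl //.
rewrite (@pevE q y (maxn (size p) (size q))) ?leq_maxr //.
rewrite (@pevE (p + q) y (maxn (size p) (size q))) ?size_polyD //.
rewrite -big_split /=; apply: eq_bigr => i _.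
by rewrite coefD rmorphD scalerDl.
Qed.

Lemma pevZ a p y : pev (a *: p) y = rc a *: pev p y.
Proof.
rewrite (@pevE (a *: p) y (size p)) ?size_scale_leq // /pev scaler_sumr.
by apply: eq_bigr => i _; rewrite coefZ c_mul scalerA.
Qed.

Lemma pevN p y : pev (- p) y = - pev p y.
Proof. by rewrite -(scaleN1r p) pevZ rmorphN rmorph1 scaleN1r. Qed.

Lemma pevB p q y : pev (p - q) y = pev p y - pev q y.
Proof. by rewrite pevD pevN. Qed.

Lemma pevC a y : pev (a%:P) y = rc a *: y.
Proof.
rewrite (@pevE _ y 1) ?size_polyC ?leq_b1 //.
by rewrite big_nat1 coefC.
Qed.

Lemma pevMX p y : pev (p * 'X) y = Bop (pev p y).
Proof.
rewrite (@pevE _ y (size p).+1); last first.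
  apply: leq_trans (size_polyMleq _ _) _; rewrite size_polyX addn2 //.
rewrite big_nat_recl // coefMX eqxx scale0r add0r /pev (lin_sum lB).
apply: eq_bigr => i _; rewrite coefMX /= (linZ lB).
by [].
Qed.

Lemma pev_lin p : linop (pev p).
Proof.
move=> a x y; rewrite /pev scaler_sumr -big_split /=; apply: eq_bigr => i _.
by rewrite (lBk i) scalerDr !scalerA mulrC.
Qed.

Lemma pevM p q y : pev (p * q) y = pev p (pev q y).
Proof.
elim/poly_ind: p => [|p a IH]; first by rewrite mul0r !pev0.
rewrite mulrDl mulrAC mul_polyC pevD pevZ pevMX IH.
by rewrite pevD pevMX pevC.
Qed.

Lemma pevX y : pev 'X y = Bop y.
Proof. by rewrite -[X in pev X]mul1r pevMX -polyC1 pevC scale1r. Qed.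

Definition nng (p : {poly R}) := forall i, 0 <= p`_i.

Lemma horner1 (p : {poly R}) : p.[1] = \sum_(0 <= i < size p) p`_i.
Proof. by rewrite horner_coef big_mkord; apply: eq_bigr => i _; rewrite expr1n mulr1. Qed.

Lemma nng_horner1 (p : {poly R}) : nng p -> 0 <= p.[1].
Proof. by move=> h; rewrite horner1 sumr_ge0. Qed.

Lemma pev_bound (p : {poly R}) y : nng p -> hnorm ip (pev p y) <= p.[1] * hnorm ip y.
Proof.
move=> hp; apply: le_trans (hnorm_sum _ _ _) _.
rewrite horner1 mulr_suml; apply: ler_sum => i _.
by rewrite hnormZ ger0_norm // ler_wpM2l.
Qed.

Lemma pev_Im (p : {poly R}) y : cIm (ip y (pev p y)) = 0.
Proof.
rewrite /pev ip_sumr Im_sum big1 // => i _.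
by rewrite ipZr ImMr sa_real ?mulr0.
Qed.

Lemma pev_re (p : {poly R}) y : nng p -> re y (pev p y) <= p.[1] * nrm2 y.
Proof.
move=> hp; rewrite /re /pev ip_sumr Re_sum horner1 mulr_suml; apply: ler_sum => i _.
rewrite ipZr ReMr; apply: ler_wpM2l => //.
by apply: le_trans (ler_norm _) (reBk _ _).
Qed.


Lemma nngD p q : nng p -> nng q -> nng (p + q).
Proof. by move=> hp hq i; rewrite coefD addr_ge0. Qed.
Lemma nngM p q : nng p -> nng q -> nng (p * q).
Proof. by move=> hp hq i; rewrite coefM sumr_ge0 // => j _; rewrite mulr_ge0. Qed.
Lemma nngZ a p : 0 <= a -> nng p -> nng (a *: p).
Proof. by move=> ha hp i; rewrite coefZ mulr_ge0. Qed.
Lemma nngX : nng 'X. Proof. by move=> i; rewrite coefX ler0n. Qed.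
Lemma nng0 : nng 0. Proof. by move=> i; rewrite coef0. Qed.

Fixpoint pp (N : nat) : {poly R} := if N is N'.+1 then 2^-1 *: ('X + pp N' ^+ 2) else 0.

Lemma nng_pp N : nng (pp N).
Proof.
elim: N => [|N IH] /=; first exact: nng0.
by apply: nngZ; [rewrite invr_ge0 ler0n | apply: nngD; [exact: nngX | rewrite expr2; exact: nngM]].
Qed.

Lemma nng_dd N : nng (pp N.+1 - pp N).
Proof.
elim: N => [|N IH].
  by rewrite /= subr0 expr0n /= addr0; apply: nngZ; [rewrite invr_ge0 ler0n | exact: nngX].
have -> : pp N.+2 - pp N.+1 = 2^-1 *: ((pp N.+1 - pp N) * (pp N.+1 + pp N)).
  by rewrite -subr_sqr [pp N.+2]/= [pp N.+1 in X in _ = X]/= -scalerBr opprD addrACA subrr add0r.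
apply: nngZ; first by rewrite invr_ge0 ler0n.
by apply: nngM => //; apply: nngD; apply: nng_pp.
Qed.

Lemma nng_ppB N M : (N <= M)%N -> nng (pp M - pp N).
Proof.
move=> /subnK <-; elim: (M - N)%N => [|d IH]; first by rewrite add0n subrr; exact: nng0.
rewrite addSn -(subrK (pp (d + N)) (pp (d + N).+1)) -addrA.
by apply: nngD => //; exact: nng_dd.
Qed.

Definition sN N := (pp N).[1].

Lemma sN_ge0 N : 0 <= sN N. Proof. exact: nng_horner1 (nng_pp N). Qed.
Lemma sN_le1 N : sN N <= 1.
Proof.
elim: N => [|N IH]; first by rewrite /sN /= horner0.
rewrite /sN /= hornerZ hornerD hornerX expr2 hornerM -/(sN N).
have := sN_ge0 N; move: IH; set v := sN N => h1 h0.
have : v * v <= 1 by rewrite -(mulr1 1) ler_pM.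
lra.
Qed.
Lemma sN_mono N M : (N <= M)%N -> sN N <= sN M.
Proof.
move=> h; have := nng_horner1 (nng_ppB h).
by rewrite hornerD hornerN subr_ge0.
Qed.

Lemma sN_cauchy e : 0 < e -> exists N, forall M, (N <= M)%N -> sN M - sN N < e.
Proof.
move=> e0.
have hs : has_sup (range sN).
  split; first by exists (sN 0%N), 0%N.
  by exists 1 => _ [N _ <-]; exact: sN_le1.
have [_ [N _ <-] hN] := sup_adherent e0 hs.
exists N => M _.
have : sN M <= sup (range sN) by apply: ub_le_sup; [case: hs | exists M].
lra.
Qed.

Definition Xn N y := pev (pp N) y.

Lemma Xn_diff y n m : (n <= m)%N -> hnorm ip (Xn m y - Xn n y) <= (sN m - sN n) * hnorm ip y.
Proof.
move=> h; rewrite /Xn -pevB.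
by apply: le_trans (pev_bound _ (nng_ppB h)) _; rewrite hornerD hornerN.
Qed.

Lemma Xn_bound N y : hnorm ip (Xn N y) <= hnorm ip y.
Proof.
apply: le_trans (pev_bound _ (nng_pp N)) _.
by rewrite -[X in _ <= X]mul1r ler_wpM2r ?hnorm_ge0 ?sN_le1.
Qed.

Lemma Xn_cauchy y : hcauchy ip (fun N => Xn N y).
Proof.
move=> e e0.
have K1 : 0 < hnorm ip y + 1 by rewrite ltr_wpDl ?hnorm_ge0.
have [N hN] := sN_cauchy (divr_gt0 e0 K1).
have key n m : (N <= n)%N -> (n <= m)%N -> hnorm ip (Xn m y - Xn n y) < e.
  move=> hn hk; apply: le_lt_trans (Xn_diff y hk) _.
  have h1 := hN m (leq_trans hn hk); have h2 := sN_mono hn; have h3 := sN_mono hk.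
  have hy := hnorm_ge0 y.
  apply: le_lt_trans (_ : e / (hnorm ip y + 1) * hnorm ip y < _).
    by apply: ler_wpM2r => //; lra.
  rewrite mulrAC ltr_pdivrMr // ltr_pM2l //; lra.
exists N => n m hn hk.
case: (leqP n m) => h; first by rewrite hnormB; apply: key.
by apply: key => //; apply: ltnW.
Qed.

Definition Xop y := epsilon (inhabits (0 : H)) (fun z => hcvg_to ip (fun N => Xn N y) z).

Lemma Xop_cvg y : hcvg_to ip (fun N => Xn N y) (Xop y).
Proof. by apply: epsilon_spec; apply: hcomp; apply: Xn_cauchy. Qed.

Lemma Xop_lin : linop Xop.
Proof.
move=> a x y.
have h1 := Xop_cvg (a *: x + y).
have h2 := hcvgD (hcvgZ a (Xop_cvg x)) (Xop_cvg y).
have e : (fun N => Xn N (a *: x + y)) = (fun N => a *: Xn N x + Xn N y).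
  by apply: funext => N; rewrite /Xn pev_lin.
by rewrite e in h1; apply: hcvg_uniq h1 h2.
Qed.

Lemma Xop_bound y : hnorm ip (Xop y) <= hnorm ip y.
Proof. exact: hcvg_bound (fun N => Xn_bound N y) (Xop_cvg y). Qed.


Lemma Xn_rec N y : Xn N.+1 y = rc (2^-1) *: (Bop y + Xn N (Xn N y)).
Proof. by rewrite /Xn /= pevZ pevD pevX expr2 pevM. Qed.

Lemma hcvg_shift u a : hcvg_to ip u a -> hcvg_to ip (fun n => u n.+1) a.
Proof. by move=> h e e0; have [N hN] := h e e0; exists N => n hn; apply: hN; apply: leqW. Qed.

Lemma XX_cvg y : hcvg_to ip (fun N => Xn N (Xn N y)) (Xop (Xop y)).
Proof.
move=> e e0.
have e2 : 0 < e / 2 by rewrite divr_gt0.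
have [N1 h1] := Xop_cvg y e2; have [N2 h2] := Xop_cvg (Xop y) e2.
exists (maxn N1 N2) => n hn.
have := h1 n (leq_trans (leq_maxl _ _) hn); have := h2 n (leq_trans (leq_maxr _ _) hn).
have b1 : hnorm ip (Xn n (Xn n y) - Xop (Xop y)) <=
   hnorm ip (Xn n (Xn n y - Xop y)) + hnorm ip (Xn n (Xop y) - Xop (Xop y)).
  have := hnormD (Xn n (Xn n y - Xop y)) (Xn n (Xop y) - Xop (Xop y)).
  by rewrite /Xn (linB (pev_lin _)) addrA subrK.
have b2 := Xn_bound n (Xn n y - Xop y).
lra.
Qed.

Lemma Xop_eq y : Xop y = rc (2^-1) *: (Bop y + Xop (Xop y)).
Proof.
have h1 := hcvg_shift (Xop_cvg y).
have h2 := hcvgZ (rc (2^-1)) (hcvgD (hcvg_cst (Bop y)) (XX_cvg y)).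
have e : (fun N => Xn N.+1 y) = (fun N => rc (2^-1) *: (Bop y + Xn N (Xn N y))).
  by apply: funext => N; rewrite Xn_rec.
by rewrite e in h1; apply: hcvg_uniq h1 h2.
Qed.

Lemma rcvg_cst0 : rcvg (fun _ => 0) 0.
Proof. by move=> e e0; exists 0%N => n _; rewrite subr0 normr0. Qed.

Lemma Xop_Im y : cIm (ip y (Xop y)) = 0.
Proof.
have h := rcvg_re ('i%C *: y) (Xop_cvg y).
have e : (fun N => re ('i%C *: y) (Xn N y)) = (fun _ => 0).
  by apply: funext => N; rewrite -Im_ip pev_Im.
rewrite e in h; rewrite Im_ip; exact: rcvg_uniq h rcvg_cst0.
Qed.

Lemma Xop_re y : re y (Xop y) <= nrm2 y.
Proof.
apply: rcvg_le (rcvg_re y (Xop_cvg y)) => N.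
apply: le_trans (pev_re _ (nng_pp N)) _.
by rewrite -[X in _ <= X]mul1r ler_wpM2r ?nrm2_ge0 ?sN_le1.
Qed.

Definition Sop y := y - Xop y.
Lemma Sop_lin : linop Sop.
Proof.
move=> a x y; rewrite /Sop Xop_lin scalerBr opprD addrACA -!addrA.
by [].
Qed.

Lemma Sop_sq y : Sop (Sop y) = rc (k^-1) *: A y.
Proof.
have e : Xop (Xop y) = Xop y + Xop y - Bop y.
  have h2 : Xop y + Xop y = Bop y + Xop (Xop y).
    rewrite {1 2}(Xop_eq y) -scalerDl -rmorphD.
    have -> : (2^-1 + 2^-1 : R) = 1 by field.
    by rewrite rmorph1 scale1r.
  by rewrite h2 addrC addKr.
rewrite {1}/Sop (linB Xop_lin) e /Sop /Bop.
rewrite !opprB [Xop y + Xop y + _ - _]addrAC addrK subrKA addrC subrK //.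
Qed.

Definition Top y := rc (Num.sqrt k) *: Sop y.

Lemma Top_sq y : Top (Top y) = A y.
Proof.
rewrite /Top (linZ Sop_lin) Sop_sq !scalerA -!c_mul -expr2 sqr_sqrtr; last exact: ltW.
by rewrite divff ?gt_eqF // rmorph1 scale1r.
Qed.

Lemma Top_pos : positive_op ip Top.
Proof.
split; first split.
- by move=> a x y; rewrite /Top Sop_lin scalerDr !scalerA mulrC.
- exists (Num.sqrt k * 2) => y.
  rewrite /Top hnormZ ger0_norm ?sqrtr_ge0 // -mulrA ler_wpM2l ?sqrtr_ge0 //.
  have := hnormD y (- Xop y); rewrite hnormN /Sop.
  have := Xop_bound y; lra.
- move=> y; rewrite /Top ipZr ge0E ImMr ReMr /Sop ipBr ImB ReB Xop_Im Im_ipxx subrr mulr0 eqxx /=.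
  rewrite mulr_ge0 ?sqrtr_ge0 // subr_ge0; exact: Xop_re.
Qed.

Lemma sqrt_exists : exists T, positive_op ip T /\ forall x, T (T x) = A x.
Proof. by exists Top; split; [exact: Top_pos | exact: Top_sq]. Qed.
End Sqrt.

Lemma op_sqrt_spec A : positive_op ip A ->
  positive_op ip (op_sqrt ip A) /\ forall x, op_sqrt ip A (op_sqrt ip A x) = A x.
Proof.
case=> [[lA [c bA]] pA]; have [T hT] := sqrt_exists lA pA bA.
exact: (@epsilon_spec _ _ (fun S => positive_op ip S /\ forall x, S (S x) = A x) (ex_intro _ T hT)).
Qed.

Lemma pos_lin T : positive_op ip T -> linop T. Proof. by case=> [[]]. Qed.
Lemma pos_ge0 T : positive_op ip T -> forall x, 0 <= ip x (T x). Proof. by case. Qed.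
Lemma pos_sa' T : positive_op ip T -> selfadj T.
Proof. by move=> h; apply: pos_sa; [exact: pos_lin | exact: pos_ge0]. Qed.
Lemma pos_re_ge0 T : positive_op ip T -> forall x, 0 <= re x (T x).
Proof. by move=> h x; have := pos_ge0 h x; rewrite ge0E => /andP []. Qed.

Lemma bound_abs T c : (forall y, hnorm ip (T y) <= c * hnorm ip y) ->
  forall y, hnorm ip (T y) <= `|c| * hnorm ip y.
Proof.
move=> h y; apply: le_trans (h y) _; apply: (ler_wpM2r (hnorm_ge0 _)); exact: ler_norm.
Qed.

Lemma pos_re_le T : positive_op ip T -> exists K, forall z, re z (T z) <= K * nrm2 z.
Proof.
case=> [[lT [c bT]] pT]; exists `|c| => z.
apply: le_trans (re_le _ _) _.
apply: le_trans (_ : hnorm ip z * (`|c| * hnorm ip z) <= _).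
  exact: (ler_wpM2l (hnorm_ge0 _) (bound_abs bT z)).
by rewrite mulrCA -hnorm_sq expr2.
Qed.

Variable m : nat.
Variable P : 'I_m -> H -> H.
Variable R0 : H -> H.
Hypothesis hP : forall j, orth_proj ip (P j).
Hypothesis hR0 : positive_op ip R0.
Hypothesis hsplit : forall v, in_H0 ip R0 v -> \sum_(j < m) P j v = v.

Let lP j : linop (P j). Proof. by case: (hP j) => [[]]. Qed.
Let idP j x : P j (P j x) = P j x. Proof. by case: (hP j). Qed.
Let saP j : selfadj (P j). Proof. by case: (hP j). Qed.

Lemma ipP j u : ip u (P j u) = ip (P j u) (P j u).
Proof. by rewrite saP idP. Qed.

Local Notation TR := (treeR ip P R0).

Lemma treeR_rcons w j : TR (rcons w j) = tree_step ip P (TR w) j.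
Proof. by rewrite /treeR foldl_rcons. Qed.

Lemma treeR_nil : TR [::] = R0. Proof. by []. Qed.

Lemma step_pos Rw j : positive_op ip Rw -> positive_op ip (tree_step ip P Rw j).
Proof.
move=> hR; have [[[lS [cS bS]] pS] sqS] := op_sqrt_spec hR.
have sS := pos_sa (fun a x y => lS a x y) pS.
case: (hP j) => [[_ [cP bP]] _ _].
split; first split.
- move=> a x y; rewrite /tree_step.
  by rewrite lS (lP j) opprD addrACA -scalerBr lS.
- exists (`|cS| * ((1 + `|cP|) * `|cS|)) => v; rewrite /tree_step.
  apply: le_trans (bound_abs bS _) _; rewrite -mulrA; apply: ler_wpM2l => //.
  apply: le_trans (hnormD _ _) _; rewrite hnormN.
  apply: le_trans (_ : hnorm ip (op_sqrt ip Rw v) * (1 + `|cP|) <= _).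
    rewrite mulrDr mulr1 lerD2l [_ * `|cP|]mulrC; exact: (bound_abs bP).
  rewrite mulrC -mulrA; apply: ler_wpM2l; first by rewrite addr_ge0.
  exact: bound_abs bS v.
- move=> v; rewrite /tree_step -sS.
  set u := op_sqrt ip Rw v.
  have -> : ip u (u - P j u) = ip (u - P j u) (u - P j u).
    by rewrite ipBl !ipBr ipP saP idP [ip (P j u) u]saP subrr subr0.
  exact: ip_ge0.
Qed.

Lemma treeR_pos w : positive_op ip (TR w).
Proof.
elim/last_ind: w => [|w j IH]; first exact: hR0.
by rewrite treeR_rcons; apply: step_pos.
Qed.

Local Notation Sq w := (op_sqrt ip (TR w)).

Lemma Sq_spec w : positive_op ip (Sq w) /\ forall x, Sq w (Sq w x) = TR w x.
Proof. exact: op_sqrt_spec (treeR_pos w). Qed.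
Lemma Sq_lin w : linop (Sq w). Proof. by case: (Sq_spec w) => /pos_lin. Qed.
Lemma Sq_sa w : selfadj (Sq w). Proof. by case: (Sq_spec w) => /pos_sa'. Qed.
Lemma Sq_sq w x : Sq w (Sq w x) = TR w x. Proof. by case: (Sq_spec w). Qed.

Lemma nrm2_Sq w z : nrm2 (Sq w z) = qf ip z (TR w).
Proof. by rewrite /nrm2 /re Sq_sa Sq_sq. Qed.

Lemma qf_step v w j : qf ip v (TR (rcons w j)) = qf ip v (TR w) - nrm2 (P j (Sq w v)).
Proof.
rewrite treeR_rcons /qf /tree_step -Sq_sa ipBr ReB ipP.
by rewrite -/(re _ _) -/(nrm2 _) nrm2_Sq.
Qed.

Lemma energyE x w j : energy_a ip P R0 x w j = nrm2 (P j (Sq w x)).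
Proof. by rewrite /energy_a /qf /treeD -Sq_sa ipP. Qed.

Lemma qf_le0 v w : qf ip v (TR w) <= qf ip v R0.
Proof.
elim/last_ind: w => [|w j IH] //.
by rewrite qf_step; apply: le_trans IH; rewrite lerBlDr lerDl nrm2_ge0.
Qed.

Lemma qf_ge0 v w : 0 <= qf ip v (TR w).
Proof. exact: pos_re_ge0 (treeR_pos w) v. Qed.

Lemma Sq_dom w z : nrm2 (Sq w z) <= nrm2 (Sq [::] z).
Proof. by rewrite !nrm2_Sq qf_le0. Qed.

Definition Qop v := \sum_(j < m) P j v - v.

Lemma Q_sa : selfadj Qop.
Proof.
move=> a b; rewrite /Qop ipBl ipBr ip_suml ip_sumr; congr (_ - _).
by apply: eq_bigr => j _; rewrite saP.
Qed.

Lemma S0Q z : Sq [::] (Qop z) = 0.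
Proof.
apply: nrm2_eq0; rewrite /nrm2 /re Sq_sa Q_sa.
have -> : Qop (Sq [::] (Sq [::] (Qop z))) = 0.
  rewrite /Qop hsplit ?subrr // => e e0; exists (Sq [::] (Qop z)).
  by rewrite subrr hnorm0.
by rewrite ip0r.
Qed.

Lemma SqQ w z : Sq w (Qop z) = 0.
Proof.
apply: nrm2_eq0; apply/eqP; rewrite eq_le nrm2_ge0 andbT.
by apply: le_trans (Sq_dom w _) _; rewrite S0Q /nrm2 re0r.
Qed.

Lemma energy_sum x w : \sum_(j < m) energy_a ip P R0 x w j = qf ip x (TR w).
Proof.
under eq_bigr do rewrite energyE /nrm2 /re -ipP.
rewrite -Re_sum -ip_sumr.
have -> : \sum_(j < m) P j (Sq w x) = Qop (Sq w x) + Sq w x by rewrite /Qop subrK.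
by rewrite ipDr ReD [ip (Sq w x) (Qop _)]Sq_sa SqQ ip0r Re0 add0r; exact: nrm2_Sq.
Qed.

Lemma treeR_bound : exists K, forall x w, nrm2 (TR w x) <= K * qf ip x (TR w).
Proof.
have [K hK] := pos_re_le hR0.
exists K => x w.
rewrite -Sq_sq; apply: le_trans (Sq_dom _ _) _.
rewrite (nrm2_Sq [::]) -(nrm2_Sq w x); exact: hK.
Qed.

End Hilb.

Local Open Scope classical_set_scope.
Local Notation pref := Defs.prefix.
Section Meas.
Variable R : realType.
Variable n : nat.
Local Notation m := n.+1.

Fixpoint W (k : nat) : seq (seq 'I_m) :=
  if k is k'.+1 then [seq rcons w j | w <- W k', j <- enum 'I_m] else [:: [::]].

Lemma W_size k w : w \in W k -> size w = k.
Proof.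
elim: k w => [|k IH] w /=; first by rewrite inE => /eqP ->.
by case/allpairsPdep => [v [j [hv _ ->]]]; rewrite size_rcons IH.
Qed.

Lemma W_uniq k : uniq (W k).
Proof.
elim: k => [|k IH] //=.
apply: allpairs_uniq_dep => //; first by move=> w _; apply: enum_uniq.
by move=> [w1 j1] [w2 j2] _ _ /= /rcons_inj [-> ->].
Qed.

Lemma prefix_in k (om : nat -> 'I_m) : pref om k \in W k.
Proof.
elim: k => [|k IH] //.
rewrite /pref /Defs.prefix mkseqS; apply/allpairsPdep; exists (pref om k), (om k).
by rewrite mem_enum.
Qed.

Lemma sumW (V : nmodType) k (F : seq 'I_m -> V) :
  \sum_(w <- W k.+1) F w = \sum_(w <- W k) \sum_(j < m) F (rcons w j).
Proof.
rewrite /= big_allpairs_dep; apply: eq_bigr => w _.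
by rewrite big_enum.
Qed.

Lemma cyl_meas w : measurable (cyl w : set (Omega n)).
Proof. by apply: sub_gen_smallest; exists w. Qed.


Lemma cs_sum (a : 'I_m -> R) : (\sum_(j < m) a j) ^+ 2 <= m%:R * \sum_(j < m) a j ^+ 2.
Proof.
set S := \sum_(j < m) a j; set T := \sum_(j < m) a j ^+ 2.
have mp : 0 < m%:R :> R by rewrite ltr0n.
set c := S / m%:R.
have h : 0 <= \sum_(j < m) (a j - c) ^+ 2 by apply: sumr_ge0 => j _; exact: sqr_ge0.
have e : \sum_(j < m) (a j - c) ^+ 2 = T + (- 2 * c) * S + m%:R * c ^+ 2.
  rewrite (eq_bigr (fun j => a j ^+ 2 + ((- 2 * c) * a j + c ^+ 2))); last by move=> j _; ring.
  by rewrite !big_split /= -mulr_sumr sumr_const card_ord mulr_natl addrA.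
rewrite e /c in h.
have e2 : T + - 2 * (S / m%:R) * S + m%:R * (S / m%:R) ^+ 2 = (m%:R * T - S ^+ 2) / m%:R.
  by field; rewrite gt_eqF.
by rewrite e2 pmulr_lge0 ?invr_gt0 // subr_ge0 in h.
Qed.

Lemma step_ineq (a q : 'I_m -> R) : (forall j, 0 <= a j) -> (forall j, 0 <= q j) ->
  \sum_(j < m) (if 0 < \sum_(k < m) a k then a j / \sum_(k < m) a k else q j) *
     (\sum_(k < m) a k - a j) <= (1 - m%:R^-1) * \sum_(k < m) a k.
Proof.
move=> a0 q0; set S := \sum_(k < m) a k.
have mp : 0 < m%:R :> R by rewrite ltr0n.
have [Sp|Sn] := ltrP 0 S.
  have e : \sum_(j < m) a j / S * (S - a j) = S - (\sum_(j < m) a j ^+ 2) / S.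
    rewrite (eq_bigr (fun j => a j - a j ^+ 2 / S)); last by move=> j _; field; rewrite gt_eqF.
    by rewrite sumrB -mulr_suml.
  rewrite e.
  have := cs_sum a; rewrite -/S => h.
  have : S / m%:R <= (\sum_(j < m) a j ^+ 2) / S.
    by rewrite ler_pdivrMr // mulrAC ler_pdivlMr // -expr2 mulrC.
  set T := (\sum_(j < m) a j ^+ 2) / S => h2.
  have -> : (1 - m%:R^-1) * S = S - S / m%:R by ring.
  by rewrite lerD2l lerN2.
have aS j : a j <= S.
  by rewrite /S (bigD1 j) //= lerDl sumr_ge0.
have S0 : S = 0 by apply/eqP; rewrite eq_le Sn /S sumr_ge0.
have az j : a j = 0 by apply/eqP; rewrite eq_le a0 andbT -S0 aS.
rewrite big1 ?S0 ?mulr0 // => j _; by rewrite az subrr mulr0.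
Qed.

Variable nu : probability (Omega n) R.
Variable pth : seq 'I_m -> R.
Hypothesis hnu : forall w, nu (cyl w) = (pth w)%:E.

Lemma int_formula k (g : seq 'I_m -> R) : (forall w, 0 <= g w) ->
  (\int[nu]_om (g (pref om k))%:E = (\sum_(w <- W k) g w * pth w)%:E)%E.
Proof.
move=> g0.
have e : (fun om : Omega n => (g (pref om k))%:E) =
    (fun om => \sum_(w <- W k) ((g w) * \1_(cyl w) om)%:E).
  apply: funext => om.
  rewrite (bigD1_seq (pref om k)) ?prefix_in ?W_uniq //= big1_seq.
    rewrite indicE mem_set; last by rewrite /cyl /= /Defs.prefix size_mkseq.
    by rewrite /= mulr1 adde0.
  move=> w /andP [hw win]; rewrite indicE memNset ?mulr0 //.
  rewrite /cyl /= (W_size win) => h; by rewrite h eqxx in hw.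
rewrite e ge0_integral_sum //.
- rewrite -sumEFin; apply: eq_bigr => w _.
  rewrite (integralZl_indic measurableT (fun _ => (cyl w : set (Omega n)))) //; last exact: cyl_meas.
    rewrite integral_indic //; last exact: cyl_meas.
    rewrite setIT EFinM; congr (_ * _)%E; exact: hnu.
  by move=> /lt_geF; rewrite g0.
- move=> w; apply/measurable_realfun.measurable_EFinP; apply: measurable_realfun.measurable_funM; first exact: measurable_cst.
  by apply: measurable_realfun.measurable_indic; exact: cyl_meas.
- by move=> w om _; rewrite lee_fin mulr_ge0 // indicE ler0n.
Qed.

End Meas.

Lemma path_prob_from_rcons (R : realType) (H : lmodType R[i]) (ip : H -> H -> R[i])
  m (P : 'I_m -> H -> H) R0 q x pre w j :
  path_prob_from ip P R0 q x pre (rcons w j) =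
  path_prob_from ip P R0 q x pre w * trans_prob ip P R0 q x (pre ++ w) j.
Proof.
elim: w pre => [|a w IH] pre /=; first by rewrite cats0 mulr1 mul1r.
by rewrite IH mulrA cat_rcons.
Qed.

Section Final.
Variable R : realType.
Variable H : lmodType R[i].
Variable ip : H -> H -> R[i].
Variable n : nat.
Local Notation m := n.+1.
Variable P : 'I_m -> H -> H.
Variable R0 : H -> H.
Variable q : 'I_m -> R.
Hypothesis hip : is_inner_product ip.
Hypothesis hcomp : forall u : nat -> H, hcauchy ip u -> exists y, hcvg_to ip u y.
Hypothesis hP : forall j, orth_proj ip (P j).
Hypothesis hR0 : positive_op ip R0.
Hypothesis hq0 : forall j, 0 <= q j.
Hypothesis hsplit : forall v, in_H0 ip R0 v -> \sum_(j < m) P j v = v.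
Variable x : H.

Local Notation TR := (treeR ip P R0).
Let Mw w := qf ip x (TR w).
Let aa w j := energy_a ip P R0 x w j.
Let tp w j := trans_prob ip P R0 q x w j.
Let pp w := path_prob ip P R0 q x w.

Lemma aa_ge0 w j : 0 <= aa w j.
Proof. by rewrite /aa (energyE hip hcomp hP hR0) nrm2_ge0. Qed.
Lemma Mw_ge0 w : 0 <= Mw w. Proof. exact: (qf_ge0 hip hcomp hP hR0). Qed.
Lemma Mw_rcons w j : Mw (rcons w j) = Mw w - aa w j.
Proof. by rewrite /Mw /aa (qf_step hip hcomp hP hR0) (energyE hip hcomp hP hR0). Qed.
Lemma aa_sum w : \sum_(j < m) aa w j = Mw w.
Proof. exact: (energy_sum hip hcomp hP hR0 hsplit). Qed.
Lemma tp_ge0 w j : 0 <= tp w j.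
Proof.
rewrite /tp /trans_prob /=; case: ifP => // h.
by rewrite divr_ge0 ?aa_ge0 // ltW.
Qed.
Lemma pp_rcons w j : pp (rcons w j) = pp w * tp w j.
Proof. by rewrite /pp /path_prob path_prob_from_rcons. Qed.
Lemma pp_ge0 w : 0 <= pp w.
Proof.
elim/last_ind: w => [|w j IH]; first by rewrite /pp /path_prob /= ler01.
by rewrite pp_rcons mulr_ge0 // tp_ge0.
Qed.

Let c := 1 - m%:R^-1 : R.
Let E k := \sum_(w <- W n k) Mw w * pp w.

Lemma E_step k : E k.+1 <= c * E k.
Proof.
rewrite /E sumW mulr_sumr; apply: ler_sum => w _.
have -> : \sum_(j < m) Mw (rcons w j) * pp (rcons w j) =
    pp w * \sum_(j < m) tp w j * (Mw w - aa w j).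
  rewrite mulr_sumr; apply: eq_bigr => j _; rewrite Mw_rcons pp_rcons; ring.
have -> : c * (Mw w * pp w) = (c * Mw w) * pp w by ring.
rewrite [pp w * _]mulrC; apply: (ler_wpM2r (pp_ge0 w)).
have h := @step_ineq R n (aa w) q (aa_ge0 w) hq0.
rewrite -aa_sum; exact: h.
Qed.

Lemma E_bound k : E k <= c ^+ k * Mw [::].
Proof.
elim: k => [|k IH].
  by rewrite /E /= big_seq1 expr0 mul1r /pp /path_prob /= mulr1.
apply: le_trans (E_step k) _; rewrite exprS -mulrA; apply: ler_wpM2l => //.
by rewrite /c subr_ge0 invf_le1 // ler1n.
Qed.


Lemma Mw_mono (om : nat -> 'I_m) k k' : (k <= k')%N -> Mw (pref om k') <= Mw (pref om k).
Proof.
move=> /subnK <-; elim: (k' - k)%N => [|d IH] //.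
rewrite addSn /pref /Defs.prefix mkseqS Mw_rcons.
by apply: le_trans IH; rewrite lerBlDr lerDl aa_ge0.
Qed.

Lemma Rinf_zero (om : nat -> 'I_m) :
  (forall e, 0 < e -> exists N, forall k, (N <= k)%N -> Mw (pref om k) < e) ->
  qf ip x (Rinf ip P R0 om) = 0.
Proof.
move=> h.
have [K hK] := treeR_bound hip hcomp hP hR0.
have cv : hcvg_to ip (fun k => TR (pref om k) x) 0.
  move=> e e0.
  have K1 : 0 < `|K| + 1 by rewrite ltr_wpDl.
  have [N hN] := h (e ^+ 2 / (`|K| + 1)) (divr_gt0 (exprn_gt0 _ e0) K1).
  exists N => k hk; rewrite subr0.
  have h1 := hN k hk; have h2 := hK x (pref om k); have h3 := Mw_ge0 (pref om k).
  rewrite ltr_pdivlMr // in h1.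
  have h4 : K * Mw (pref om k) <= (`|K| + 1) * Mw (pref om k).
    by apply: ler_wpM2r => //; apply: le_trans (ler_norm _) _; rewrite lerDl.
  have h5 : nrm2 ip (TR (pref om k) x) < e ^+ 2.
    apply: le_lt_trans h2 _; apply: le_lt_trans h4 _; by rewrite mulrC.
  rewrite hnormE -(ger0_norm (ltW e0)) -sqrtr_sqr ltr_sqrt //.
  by rewrite exprn_gt0 // normr_gt0 gt_eqF.
have hz := @epsilon_spec _ (inhabits (0:H))
   (fun z => hcvg_to ip (fun k => TR (pref om k) x) z) (ex_intro _ 0 cv).
by rewrite /qf /Rinf (hcvg_uniq hip hz cv) (ip0r hip).
Qed.


Lemma pow_small (a K e : R) : 0 <= a -> a < 1 -> 0 <= K -> 0 < e -> exists k, a ^+ k * K < e.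
Proof.
move=> a0 a1 K0 e0; set d := 1 - a.
have d0 : 0 < d by rewrite subr_gt0.
have hb k : a ^+ k * (1 + k%:R * d) <= 1.
  elim: k => [|k IH]; first by rewrite expr0 mul0r addr0 mulr1.
  apply: le_trans IH; rewrite exprS -mulrA [a * _]mulrC -mulrA; apply: (ler_wpM2l (exprn_ge0 k a0)).
  rewrite /d -natr1.
  have hk : 0 <= k%:R :> R by rewrite ler0n.
  have := mulr_ge0 (addr_ge0 hk ler01) (sqr_ge0 (1 - a)); rewrite -subr_ge0.
  suff -> : 1 + k%:R * (1 - a) - (1 + (k%:R + 1) * (1 - a)) * a = (k%:R + 1) * (1 - a) ^+ 2 by [].
  ring.
have B0 : 0 <= K / (e * d) by rewrite divr_ge0 // mulr_ge0 // ltW.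
set k := Num.Def.archi_bound (K / (e * d)).
have hk : K / (e * d) < k%:R := archi_boundP B0.
exists k.
have p1 : 0 < 1 + k%:R * d by rewrite ltr_wpDr // mulr_ge0 ?ler0n // ltW.
have e1 : K < e * (1 + k%:R * d).
  rewrite ltr_pdivrMr ?mulr_gt0 // in hk.
  nra.
apply: le_lt_trans (_ : K / (1 + k%:R * d) < e); last by rewrite ltr_pdivrMr // mulrC.
have -> : a ^+ k * K = (a ^+ k * (1 + k%:R * d)) * (K / (1 + k%:R * d)) by field; rewrite gt_eqF.
rewrite -[X in _ <= X]mul1r; apply: ler_wpM2r (hb k); by rewrite divr_ge0 // ltW.
Qed.

Variable nu : probability (Omega n) R.
Hypothesis hnu : forall w, nu (cyl w) = (path_prob ip P R0 q x w)%:E.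

Lemma int_E k : (\int[nu]_om (Mn ip P R0 x k om)%:E = (E k)%:E)%E.
Proof. exact: (int_formula hnu k Mw_ge0). Qed.

Lemma pre_meas k (Pr : pred (seq 'I_m)) : measurable [set om : Omega n | Pr (pref om k)].
Proof.
rewrite (_ : [set om | _] = \big[setU/set0]_(w <- W n k | Pr w) cyl w).
  by apply: bigsetU_measurable => w _; exact: cyl_meas.
rewrite -bigcup_seq_cond; apply/seteqP; split => om /=.
  move=> h; exists (pref om k) => /=; first by rewrite prefix_in h.
  by rewrite /cyl /= /Defs.prefix size_mkseq.
case=> w /= /andP [win pw]; rewrite /cyl /= (W_size win) => ->; exact: pw.
Qed.


Let ep (p : nat) : R := (p.+1%:R)^-1.
Let Aset p k := [set om : Omega n | ep p <= Mw (pref om k)].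

Lemma nu_A p k : (nu (Aset p k) <= ((p.+1%:R) * (c ^+ k * Mw [::]))%:E)%E.
Proof.
have mA : measurable (Aset p k) := pre_meas k (fun w => ep p <= Mw w).
have e1 : nu (Aset p k) = (\sum_(w <- W n k) ((ep p <= Mw w)%R)%:R * pp w)%:E.
  rewrite -(int_formula hnu k (g := fun w => ((ep p <= Mw w)%R)%:R)); last by move=> w; rewrite ler0n.
  have e2 := integral_indic nu measurableT mA; rewrite setIT in e2; rewrite -e2.
  apply: eq_integral => om _; rewrite indicE.
  case: (boolP (ep p <= Mw (pref om k))) => h.
    by rewrite mem_set.
  by rewrite memNset //; apply/negP.
rewrite e1 lee_fin.
apply: le_trans (_ : \sum_(w <- W n k) p.+1%:R * Mw w * pp w <= _).
  apply: ler_sum => w _; apply: (ler_wpM2r (pp_ge0 w)).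
  case: (boolP (ep p <= Mw w)) => h /=.
    by rewrite -ler_pdivrMl ?ltr0n // mulr1.
  by rewrite mulr_ge0 ?ler0n ?Mw_ge0.
rewrite (eq_bigr (fun w => p.+1%:R * (Mw w * pp w))); last by move=> w _; rewrite mulrA.
rewrite -mulr_sumr; apply: ler_wpM2l; first by rewrite ler0n.
exact: E_bound.
Qed.

Let Nset p := \bigcap_k Aset p k.

Lemma c_bounds : 0 <= c /\ c < 1.
Proof.
split; first by rewrite /c subr_ge0 invf_le1 // ler1n.
by rewrite /c ltrBlDr ltrDl invr_gt0 ltr0n.
Qed.

Lemma Nset_null p : nu.-negligible (Nset p).
Proof.
have mN : measurable (Nset p).
  rewrite /Nset; apply: bigcap_measurable; first by exists 0%N.
  move=> k _; exact: (pre_meas k (fun w => ep p <= Mw w)).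
exists (Nset p); split => //.
apply/eqP; rewrite eq_le measure_ge0 andbT.
apply/lee_addgt0Pr => e e0; rewrite add0e.
have [c0 c1] := c_bounds.
have K0 : 0 <= p.+1%:R * Mw [::] by rewrite mulr_ge0 ?ler0n ?Mw_ge0.
have [k hk] := pow_small c0 c1 K0 e0.
apply: le_trans (_ : nu (Aset p k) <= _)%E.
  apply: le_measure; rewrite ?inE; [exact: mN | exact: (pre_meas k (fun w => ep p <= Mw w)) | ].
  by move=> om hom; apply: hom.
apply: le_trans (nu_A p k) _; rewrite lee_fin.
by apply: ltW; rewrite mulrCA.
Qed.

Lemma ae_claim : {ae nu, forall om : Omega n, qf ip x (Rinf ip P R0 om) = 0}.
Proof.
rewrite /prop_near1 /almost_everywhere /=.
change (nu.-negligible (~` [set om : Omega n | qf ip x (Rinf ip P R0 om) = 0])).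
apply: (negligibleS _ (negligible_bigcup Nset_null)).
move=> om /= hne; apply: contrapT => hnot; apply: hne; apply: Rinf_zero => e e0.
have B0 : 0 <= e^-1 by rewrite invr_ge0 ltW.
set p := Num.Def.archi_bound (e^-1).
have hp : e^-1 < p%:R := archi_boundP B0.
have hep : ep p < e.
  have h1 : e * e^-1 = 1 by rewrite mulfV ?gt_eqF.
  have h2 : e * e^-1 < e * p%:R by rewrite ltr_pM2l.
  have h3 : e * p.+1%:R = e * p%:R + e by rewrite mulrS mulrDr mulr1 addrC.
  rewrite /ep -(mul1r (_^-1)) ltr_pdivrMr ?ltr0n //.
  lra.
have [k hk] : exists k, Mw (pref om k) < ep p.
  apply: contrapT => hno; apply: hnot; exists p => // k _ /=.
  rewrite /Aset /= leNgt; apply/negP => hlt; apply: hno; by exists k.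
exists k => k' hk'; apply: le_lt_trans (Mw_mono om hk') _; exact: lt_trans hk hep.
Qed.

End Final.

Theorem corollary5p4 (R : realType) (H : lmodType R[i]) (ip : H -> H -> R[i])
  (n : nat) (P : 'I_n.+1 -> H -> H) (R0 : H -> H) (q : 'I_n.+1 -> R) :
  hilbert ip -> (1 <= n)%N ->
  (forall j, orth_proj ip (P j)) -> positive_op ip R0 ->
  (forall j, 0 <= q j) -> \sum_(j < n.+1) q j = 1 ->
  (forall v, in_H0 ip R0 v -> \sum_(j < n.+1) P j v = v) ->
  forall x : H, 0 < qf ip x R0 ->
  forall nu : probability (Omega n) R,
  (forall w : seq 'I_n.+1, nu (cyl w) = (path_prob ip P R0 q x w)%:E) ->
  (forall k : nat,
     (\int[nu]_om (Mn ip P R0 x k om)%:E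
        <= ((1 - (n.+1)%:R^-1) ^+ k * qf ip x R0)%:E)%E) /\
  {ae nu, forall om : Omega n, qf ip x (Rinf ip P R0 om) = 0}.
Proof.
move=> [hip hcomp] _ hP hR0 hq0 _ hsplit x _ nu hnu.
split.
- move=> k; rewrite (int_E hip hcomp hP hR0 hnu k) lee_fin.
  exact: (E_bound hip hcomp hP hR0 hq0 hsplit).
- exact: (ae_claim hip hcomp hP hR0 hq0 hsplit hnu).
Qed.
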